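(* Work in Cramér's random model: let $\mathcal{P}$ be a random subset of the integers $\ge 3$ in which each integer $m \ge 3$ is included independently with probability $1/\ln m$, and let $q_1 < q_2 < \cdots$ be the elements of $\mathcal{P}$ listed in increasing order. For $n,k \ge 1$ put $T_k(n) = q_n + q_{n+1} + \cdots + q_{n+k-1}$. Then, with probability $1$, for every $n \ge 1$ there exists an odd integer $k \ge 3$ such that $T_k(n) \in \mathcal{P}$. Equivalently, the probability that there exists $n$ such that $T_k(n) \notin \mathcal{P}$ for all odd $k \ge 3$ is zero.
   Context: Cramér's probabilistic model of the primes replaces the set of primes by a random set in which each integer $m\ge 3$ is declared ''prime'' independently with probability $1/\ln m$, where $\ln$ is the natural logarithm. The sums $T_k(n)$ are the model analogue of sums of $k$ consecutive primes starting at the $n$-th prime. *)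

(* Defs.v *)
From HB Require Import structures.
From mathcomp Require Import all_boot all_order all_algebra.
From mathcomp Require Import all_classical all_reals all_analysis.
Set Implicit Arguments. Unset Strict Implicit. Unset Printing Implicit Defensive.
Import Order.TTheory GRing.Theory Num.Theory.
Local Open Scope classical_set_scope.
Local Open Scope ring_scope.

(* A random set of naturals is given by a family of events E m = {m \in P}. *)

Definition mutually_independent_events {d} {T : measurableType d} {R : realType}
  (P : probability T R) (E : nat -> set T) : Prop :=
  forall s : seq nat, uniq s ->
    P (\bigcap_(i in [set` s]) E i) = (\prod_(i <- s) P (E i))%E.

Definition cramer_model {d} {T : measurableType d} {R : realType}
  (P : probability T R) (E : nat -> set T) : Prop :=
  [/\ (forall m, measurable (E m)),
      mutually_independent_events P E,
      (forall m, (3 <= m)%N -> P (E m) = ((ln (m%:R : R))^-1)%:E) &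
      (forall m, (m < 3)%N -> E m = set0)].

(* Smallest element of the random set (at outcome w) strictly larger than a;
   junk value 0 if there is none. *)
Definition next_elt {T : Type} (E : nat -> set T) (w : T) (a : nat) : nat :=
  match pselect (exists m, (a < m)%N && `[< E m w >]) with
  | left h => ex_minn h
  | right _ => 0%N
  end.

(* q n = n-th element (1-indexed) of the random set, listed increasingly. *)
Definition qelt {T : Type} (E : nat -> set T) (w : T) (n : nat) : nat :=
  iter n (next_elt E w) 0%N.

Definition Tsum {T : Type} (E : nat -> set T) (w : T) (k n : nat) : nat :=
  (\sum_(i < k) qelt E w (n + i))%N.

(* Main.v *)
Require Import Defs.
From HB Require Import structures.
From mathcomp Require Import all_boot all_order all_algebra.
From mathcomp Require Import all_classical all_reals all_analysis.
From mathcomp Require Import ring lra zify.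
Set Implicit Arguments. Unset Strict Implicit. Unset Printing Implicit Defensive.
Import Order.TTheory GRing.Theory Num.Theory.
Local Open Scope classical_set_scope.
Local Open Scope ring_scope.
Section P1.
Variables (R : realType) (d : measure_display) (T : measurableType d)
  (P : probability T R) (E : nat -> set T).
Hypothesis mE : forall m, measurable (E m).
Hypothesis indep : mutually_independent_events P E.

Definition pr (A : set T) : R := fine (P A).
Definition pp i := pr (E i).
Definition posL (S : seq nat) : set T := foldr (fun i A => E i `&` A) setT S.
Definition negL (S : seq nat) : set T := foldr (fun i A => ~` E i `&` A) setT S.

Lemma prE A : measurable A -> P A = (pr A)%:E.
Proof. move=> mA; rewrite /pr fineK //; exact: fin_num_measure. Qed.

Lemma pr_ge0 A : measurable A -> 0 <= pr A.
Proof. by move=> mA; rewrite -lee_fin -prE. Qed.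

Lemma pr_le1 A : measurable A -> pr A <= 1.
Proof. by move=> mA; rewrite -lee_fin -prE // probability_le1. Qed.

Lemma pr_setT : pr setT = 1.
Proof. by rewrite /pr probability_setT. Qed.

Lemma pr_set0 : pr set0 = 0.
Proof. by rewrite /pr measure0. Qed.

Lemma pr_split A B : measurable A -> measurable B ->
  pr A = pr (A `&` B) + pr (A `&` ~` B).
Proof.
move=> mA mB.
have mI : measurable (A `&` B) by exact: measurableI.
have mIC : measurable (A `&` ~` B) by apply: measurableI => //; exact: measurableC.
apply/EFin_inj; rewrite EFinD -!prE //.
by rewrite (measureDI _ mA mB) setDE addeC.
Qed.

Lemma pr_le A B : measurable A -> measurable B -> A `<=` B -> pr A <= pr B.
Proof. by move=> mA mB AB; rewrite -lee_fin -!prE // le_measure ?inE. Qed.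

Lemma pr_U2 A B : measurable A -> measurable B -> pr (A `|` B) <= pr A + pr B.
Proof.
move=> mA mB; rewrite -lee_fin EFinD -!prE //; last exact: measurableU.
exact: measureU2.
Qed.

Lemma pr_U2disj A B : measurable A -> measurable B -> A `&` B = set0 ->
  pr (A `|` B) = pr A + pr B.
Proof.
move=> mA mB AB; apply/EFin_inj; rewrite EFinD -!prE //; last exact: measurableU.
exact: measureU.
Qed.

Lemma posL_meas S : measurable (posL S).
Proof. elim: S => [|i S IH] /=; [exact: measurableT | exact: measurableI]. Qed.

Lemma negL_meas S : measurable (negL S).
Proof.
elim: S => [|i S IH] /=; first exact: measurableT.
by apply: measurableI => //; exact: measurableC.
Qed.

Lemma posLE S w : posL S w <-> (forall i, i \in S -> E i w).
Proof.
elim: S => [|j S IH] /=; first by split.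
split.
- move=> [Ej /IH H] i; rewrite inE => /orP [/eqP -> //|]; exact: H.
- move=> H; split; first by apply: H; rewrite inE eqxx.
  by apply/IH => i iS; apply: H; rewrite inE iS orbT.
Qed.

Lemma pr_posL S : uniq S -> pr (posL S) = \prod_(i <- S) pp i.
Proof.
move=> uS; apply/EFin_inj; rewrite -prE; last exact: posL_meas.
rewrite -prodEFin.
have -> : posL S = \bigcap_(i in [set` S]) E i.
  apply/seteqP; split => w.
  - by move/posLE => H i /= iS; apply: H.
  - by move=> H; apply/posLE => i iS; apply: H.
rewrite indep //; apply: eq_bigr => i _; rewrite prE //.
Qed.

Lemma pr_posnegL S U : uniq (S ++ U) ->
  pr (posL S `&` negL U) = \prod_(i <- S) pp i * \prod_(i <- U) (1 - pp i).
Proof.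
elim: U S => [|u U IH] S.
  by rewrite cats0 /= setIT big_nil mulr1; exact: pr_posL.
move=> uSU.
have uS' : uniq ((u :: S) ++ U).
  rewrite (perm_uniq (s2 := S ++ u :: U)) //.
  by rewrite -[u :: U]cat1s -[(u::S)++U]/([:: u] ++ S ++ U) perm_catCA.
have mX : measurable (posL S `&` negL U) by apply: measurableI; [exact: posL_meas|exact: negL_meas].
have H := pr_split mX (mE u).
have eA : posL S `&` negL U `&` E u = posL (u :: S) `&` negL U.
  by apply/seteqP; split => w /= [[a b] c]; do ?split.
have eB : posL S `&` negL U `&` ~` E u = posL S `&` negL (u :: U).
  by apply/seteqP; split => w /=; [move=> [[a b] c]|move=> [a [b c]]]; do ?split.
have uS1 : uniq (S ++ U).
  move: uSU; rewrite (perm_uniq (s2 := u :: (S ++ U))); first by case/andP.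
  by rewrite -[u :: U]cat1s -[u :: (S ++ U)]/([:: u] ++ S ++ U) perm_catCA.
rewrite eA eB (IH S uS1) (IH (u :: S) uS') big_cons in H.
have -> : pr (posL S `&` negL (u :: U)) = \prod_(i <- S) pp i * \prod_(i <- U) (1 - pp i) - pp u * \prod_(i <- S) pp i * \prod_(i <- U) (1 - pp i) by rewrite H; ring.
rewrite big_cons; ring.
Qed.

End P1.
Section P2.
Variables (R : realType) (d : measure_display) (T : measurableType d)
  (P : probability T R) (E : nat -> set T).
Hypothesis mE : forall m, measurable (E m).
Hypothesis indep : mutually_independent_events P E.

Definition agree (t : nat) (w w' : T) := forall i, (i < t)%N -> (E i w <-> E i w').
Definition det (t : nat) (D : set T) := forall w w', agree t w w' -> D w -> D w'.

Lemma agree_sym t w w' : agree t w w' -> agree t w' w.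
Proof. by move=> H i it; split => /(H i it). Qed.

Lemma agree_trans t w1 w2 w3 : agree t w1 w2 -> agree t w2 w3 -> agree t w1 w3.
Proof. by move=> H1 H2 i it; rewrite (propext (H1 i it)) (propext (H2 i it)). Qed.

Lemma agree_le t t' w w' : (t' <= t)%N -> agree t w w' -> agree t' w w'.
Proof. move=> tt H i it; apply: H; exact: leq_trans it tt. Qed.

Let Xs S U := posL E S `&` negL E U.

Lemma notin_all t (s : seq nat) : all (fun i => t.+1 <= i)%N s -> t \notin s.
Proof.
move=> /allP H; apply/negP => /H; by rewrite ltnn.
Qed.

Lemma det_main t : forall D, det t D -> measurable D /\
  forall S U, uniq (S ++ U) -> all (fun i => t <= i)%N (S ++ U) ->
  pr P (D `&` Xs S U) = pr P D * (\prod_(i <- S) pp P E i * \prod_(i <- U) (1 - pp P E i)).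
Proof.
elim: t => [|t IH] D dD.
  have [[w0 Dw0]|nD] := pselect (exists w, D w).
    have -> : D = setT by apply/seteqP; split => // w _; apply: (dD w0).
    split; first exact: measurableT.
    move=> S U uSU _; rewrite setTI pr_setT mul1r pr_posnegL //.
  have -> : D = set0 by apply/seteqP; split => // w Dw; apply: nD; exists w.
  split; first exact: measurable0.
  by move=> *; rewrite set0I pr_set0 mul0r.
pose D1 := [set w | exists w', [/\ agree t w w', E t w' & D w']].
pose D0 := [set w | exists w', [/\ agree t w w', ~ E t w' & D w']].
have dD1 : det t D1.
  move=> w w2 a [w' [a' e' D']]; exists w'; split => //.
  exact: agree_trans (agree_sym a) a'.
have dD0 : det t D0.
  move=> w w2 a [w' [a' e' D']]; exists w'; split => //.
  exact: agree_trans (agree_sym a) a'.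
have [mD1 H1] := IH _ dD1.
have [mD0 H0] := IH _ dD0.
have ext : forall w w', agree t w w' -> (E t w <-> E t w') -> agree t.+1 w w'.
  move=> w w' a et i; rewrite ltnS leq_eqVlt => /orP [/eqP -> //|]; exact: a.
have eq1 : D `&` E t = D1 `&` E t.
  apply/seteqP; split => w [Dw Ew]; split => //.
  - by exists w; split.
  - case: Dw => w' [a e D']; apply: (dD w') => //; apply: ext.
      exact: agree_sym.
    by split.
have eq0 : D `&` ~` E t = D0 `&` ~` E t.
  apply/seteqP; split => w [Dw Ew]; split => //.
  - by exists w; split.
  - case: Dw => w' [a e D']; apply: (dD w') => //; apply: ext.
      exact: agree_sym.
    by split.
have DU : D = (D1 `&` E t) `|` (D0 `&` ~` E t).
  by rewrite -eq1 -eq0 -setIUr setUCr setIT.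
have mD : measurable D.
  rewrite DU; apply: measurableU; apply: measurableI => //; exact: measurableC.
split => // S U uSU aSU.
have nt : t \notin S ++ U by exact: notin_all.
have mX : forall S U, measurable (Xs S U).
  by move=> S' U'; apply: measurableI; [exact: posL_meas|exact: negL_meas].
have split1 : forall S U, pr P (D `&` Xs S U) =
    pr P (D1 `&` Xs (t :: S) U) + pr P (D0 `&` Xs S (t :: U)).
  move=> S' U'; rewrite (pr_split P (measurableI _ _ mD (mX S' U')) (mE t)).
  congr (_ + _); congr (pr P _).
  - rewrite /Xs /=; apply/seteqP; split => w.
      move=> [[Dw [a b]] e]; have : (D `&` E t) w by [].
      by rewrite eq1 => -[D1w _]; do ?split.
    move=> [D1w [[e a] b]]; have : (D1 `&` E t) w by [].
    by rewrite -eq1 => -[Dw _]; do ?split.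
  - rewrite /Xs /=; apply/seteqP; split => w.
      move=> [[Dw [a b]] e]; have : (D `&` ~` E t) w by [].
      by rewrite eq0 => -[D1w _]; do ?split.
    move=> [D1w [a [e b]]]; have : (D0 `&` ~` E t) w by [].
    by rewrite -eq0 => -[Dw _]; do ?split.
have allS : all (fun i => t <= i)%N ((t :: S) ++ U).
  rewrite /= leqnn /=; apply/allP => i /(allP aSU); exact: ltnW.
have allU : all (fun i => t <= i)%N (S ++ t :: U).
  rewrite all_cat /= leqnn /=; move: aSU; rewrite all_cat => /andP [a1 a2].
  apply/andP; split; apply/allP => i.
    by move/(allP a1); exact: ltnW.
  by move/(allP a2); exact: ltnW.
have uS : uniq ((t :: S) ++ U) by rewrite /= nt.
have uU : uniq (S ++ t :: U).
  rewrite (perm_uniq (s2 := (t :: S) ++ U)) //.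
  by rewrite -[t :: U]cat1s -[(t::S)++U]/([:: t] ++ S ++ U) perm_catCA.
have pD : pr P D = pr P D1 * pp P E t + pr P D0 * (1 - pp P E t).
  have := split1 [::] [::].
  rewrite /Xs /= !setIT => ->.
  have := H1 [:: t] [::]; rewrite /Xs /= !setIT !big_cons !big_nil => ->; first last.
    by rewrite /= leqnn. by [].
  have := H0 [::] [:: t]; rewrite /Xs /= !setIT !big_cons !big_nil => ->; first last.
    by rewrite /= leqnn. by [].
  ring.
rewrite split1 H1 // H0 // pD !big_cons; ring.
Qed.

Lemma det_meas t D : det t D -> measurable D.
Proof. by move/det_main => []. Qed.

Lemma det_indep t D : det t D ->
  pr P (D `&` ~` E t) = pr P D * (1 - pp P E t).
Proof.
move=> dD; have [_ H] := det_main dD.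
have := H [::] [:: t]; rewrite /Xs /= !setIT !setTI !big_cons !big_nil.
rewrite /= leqnn => -> //; ring.
Qed.

End P2.
Section P3.
Variables (R : realType) (d : measure_display) (T : measurableType d)
  (P : probability T R) (E : nat -> set T).
Hypothesis mE : forall m, measurable (E m).
Hypothesis indep : mutually_independent_events P E.

Lemma stop_bound (D : set T) (tau : T -> nat) (beta : R) :
  (forall t, det E t (D `&` [set w | tau w = t])) ->
  (forall w, D w -> beta <= pp P E (tau w)) ->
  forall B, measurable (D `&` [set w | (tau w <= B)%N]) /\
   pr P (D `&` [set w | (tau w <= B)%N] `&` [set w | ~ E (tau w) w]) <=
     (1 - beta) * pr P (D `&` [set w | (tau w <= B)%N]).
Proof.
move=> dt hb.
have piece : forall t, measurable (D `&` [set w | tau w = t]) /\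
  measurable (D `&` [set w | tau w = t] `&` [set w | ~ E (tau w) w]) /\
   pr P (D `&` [set w | tau w = t] `&` [set w | ~ E (tau w) w]) <=
     (1 - beta) * pr P (D `&` [set w | tau w = t]).
  move=> t; have mt := det_meas mE indep (dt t).
  have -> : D `&` [set w | tau w = t] `&` [set w | ~ E (tau w) w] =
            D `&` [set w | tau w = t] `&` ~` E t.
    apply/seteqP; split => w [[Dw /= tw] ew]; (split; [split|]) => //=; first [by rewrite -tw | by rewrite tw].
  split => //; split; first by apply: measurableI => //; exact: measurableC.
  rewrite (det_indep mE indep (dt t)).
  have [[w [Dw tw]]|ne] := pselect (exists w, D w /\ tau w = t).
    rewrite mulrC; apply: ler_wpM2r; first exact: pr_ge0.
    by rewrite lerD2l lerN2 -tw; exact: hb.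
  have -> : D `&` [set w | tau w = t] = set0.
    by apply/seteqP; split => // w [Dw tw]; apply: ne; exists w.
  by rewrite pr_set0 !mul0r mulr0.
elim => [|B [IHm IHb]].
  have -> : [set w | (tau w <= 0)%N] = [set w | tau w = 0%N].
    by apply/seteqP; split => w /=; rewrite leqn0 => /eqP.
  by have [? []] := piece 0%N.
have eqU : D `&` [set w | (tau w <= B.+1)%N] =
  (D `&` [set w | (tau w <= B)%N]) `|` (D `&` [set w | tau w = B.+1]).
  rewrite -setIUr; congr (_ `&` _); apply/seteqP; split => w /=.
    by rewrite leq_eqVlt ltnS => /orP [/eqP ->|]; [right|left].
  by case => [|->] //; move=> h; exact: leqW.
have [m1 [m2 b2]] := piece B.+1.
have disj : forall X Y, (D `&` [set w | (tau w <= B)%N] `&` X) `&` (D `&` [set w | tau w = B.+1] `&` Y) = set0.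
  move=> X Y; apply/seteqP; split => // w [[[_ /= h] _] [[_ /= h2] _]].
  by move: h; rewrite h2 ltnn.
have mN : measurable (D `&` [set w | (tau w <= B)%N] `&` [set w | ~ E (tau w) w]).
  have -> : D `&` [set w | (tau w <= B)%N] `&` [set w | ~ E (tau w) w] =
    \bigcup_t (if (t <= B)%N then D `&` [set w | tau w = t] `&` [set w | ~ E (tau w) w] else set0).
    apply/seteqP; split => w.
      by move=> [[Dw /= tw] ew]; exists (tau w) => //=; rewrite tw.
    move=> [t _]; case: ifP => // tB [[Dw tw] ew]; split => //; split => //=.
    by rewrite tw.
  apply: bigcupT_measurable => t; case: ifP => _; [exact: (piece t).2.1|exact: measurable0].
split; first by rewrite eqU; exact: measurableU.
rewrite eqU setIUl pr_U2disj //.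
rewrite pr_U2disj //; last by have := disj setT setT; rewrite !setIT.
rewrite mulrDr; exact: lerD.
Qed.

End P3.
Section P4.
Variables (d : measure_display) (T : measurableType d) (E : nat -> set T).

Lemma next_spec w a : (exists m, (a < m)%N /\ E m w) ->
  [/\ (a < next_elt E w a)%N, E (next_elt E w a) w &
      forall m, (a < m)%N -> E m w -> (next_elt E w a <= m)%N].
Proof.
move=> [m0 [am Em]]; rewrite /next_elt.
case: pselect => [h|h]; last first.
  by exfalso; apply: h; exists m0; rewrite am /=; apply/asboolP.
case: ex_minnP => m /andP [am' /asboolP Em'] mn; split => // m1 a1 e1.
by apply: mn; rewrite a1 /=; apply/asboolP.
Qed.

Lemma next_gt w a : (a < next_elt E w a)%N ->
  [/\ E (next_elt E w a) w &
      forall m, (a < m)%N -> E m w -> (next_elt E w a <= m)%N].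
Proof.
move=> h; have [hm|] := pselect (exists m, (a < m)%N /\ E m w).
  by case: (next_spec hm) => _ e m; split.
move=> nx; exfalso; move: h; rewrite /next_elt.
destruct (pselect _) as [hh|hh] => //.
case: hh => m /andP [am /asboolP em] _; by apply: nx; exists m.
Qed.

Lemma next_agree L w w' a : agree E L w w' -> (a < next_elt E w a)%N ->
  (next_elt E w a < L)%N -> next_elt E w' a = next_elt E w a.
Proof.
move=> ag h hL; have [e1 min1] := next_gt h.
have e1' : E (next_elt E w a) w' by apply/(ag _ hL).
have [h' e2 min2] := next_spec (ex_intro _ _ (conj h e1')).
apply/eqP; rewrite eqn_leq min2 //=; apply: min1 => //.
apply/(ag _ (leq_ltn_trans (min2 _ h e1') hL)) => //.
Qed.

Definition inc w N := forall i, (i < N)%N -> (qelt E w i < qelt E w i.+1)%N.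

Lemma qeltS w i : qelt E w i.+1 = next_elt E w (qelt E w i).
Proof. by rewrite /qelt iterS. Qed.

Lemma inc_le w N : inc w N -> forall i j, (i <= j <= N)%N -> (qelt E w i <= qelt E w j)%N.
Proof.
move=> h i j /andP [ij jN]; elim: j ij jN => [|j IH] ij jN.
  by move: ij; rewrite leqn0 => /eqP ->.
move: ij; rewrite leq_eqVlt => /orP [/eqP -> //|]; rewrite ltnS => ij.
apply: leq_trans (IH ij (ltnW jN)) _; exact: ltnW (h _ jN).
Qed.

Lemma inc_lt w N : inc w N -> forall i j, (i < j <= N)%N -> (qelt E w i < qelt E w j)%N.
Proof.
move=> h i j /andP [ij jN]; apply: leq_trans (h i (leq_trans ij jN)) _.
by apply: (inc_le h); rewrite ij jN.
Qed.

Lemma inc_pos w N : inc w N -> forall i, (1 <= i <= N)%N -> (1 <= qelt E w i)%N.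
Proof. by move=> h i hi; apply: (inc_lt h (i := 0)). Qed.

Lemma inc_mem w N : inc w N -> forall i, (1 <= i <= N)%N -> E (qelt E w i) w.
Proof.
move=> h [|i] // /andP [_ iN]; rewrite qeltS.
have := h i iN; rewrite qeltS => /next_gt []//.
Qed.

Lemma inc_W w N M : (M <= N)%N -> inc w N -> inc w M.
Proof. by move=> MN h i iM; apply: h; exact: leq_trans iM MN. Qed.

Lemma q_agree L w w' N : agree E L w w' -> inc w N -> (qelt E w N < L)%N ->
  inc w' N /\ forall i, (i <= N)%N -> qelt E w' i = qelt E w i.
Proof.
move=> ag h hL.
have eqs : forall i, (i <= N)%N -> qelt E w' i = qelt E w i.
  elim => [|i IH] iN; first by [].
  rewrite !qeltS IH ?(ltnW iN) //.
  apply: (next_agree ag); first by rewrite -qeltS; exact: h.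
  rewrite -qeltS; apply: leq_ltn_trans hL; apply: (inc_le h); by rewrite iN leqnn.
split => // i iN; rewrite !eqs //; [exact: h| exact: ltnW].
Qed.

Lemma Tsum_eq w w' k n : (forall i, (i < k)%N -> qelt E w' (n + i) = qelt E w (n + i)) ->
  Tsum E w' k n = Tsum E w k n.
Proof.
move=> h; rewrite /Tsum; apply: eq_bigr => i _; exact: h.
Qed.

Lemma Tsum_top w k n : (1 <= n)%N -> inc w (n + k.+1) ->
  (qelt E w (n + k.+1) < Tsum E w k.+2 n)%N.
Proof.
move=> n1 h; rewrite /Tsum big_ord_recr /= big_ord_recl /= addn0.
have h1 : (1 <= qelt E w n)%N by apply: (inc_pos h); rewrite n1 leq_addr.
lia.
Qed.

Lemma Tsum_le w k n : inc w (n + k) ->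
  (Tsum E w k.+1 n <= k.+1 * qelt E w (n + k))%N.
Proof.
move=> h; rewrite /Tsum; apply: (@leq_trans (\sum_(i < k.+1) qelt E w (n + k))).
  apply: leq_sum => i _; apply: (inc_le h); by rewrite leq_add2l -ltnS ltn_ord /= leqnn.
by rewrite sum_nat_const card_ord.
Qed.

Lemma Tsum_S w k n : Tsum E w k.+1 n = (Tsum E w k n + qelt E w (n + k))%N.
Proof. by rewrite /Tsum big_ord_recr. Qed.

Lemma Tsum_mono w n j k : (1 <= n)%N -> (j <= k)%N -> inc w (n + k) ->
  (Tsum E w j n < Tsum E w k.+1 n)%N.
Proof.
move=> n1; elim: k => [|k IH] jk h.
  move: jk; rewrite leqn0 => /eqP ->; rewrite Tsum_S /Tsum big_ord0 add0n.
  by apply: (inc_pos h); rewrite addn0 n1 /=.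
rewrite Tsum_S.
have hp : (1 <= qelt E w (n + k.+1))%N.
  by apply: (inc_pos h); apply/andP; split; lia.
move: jk; rewrite leq_eqVlt => /orP [/eqP ->|jk]; first lia.
have := IH jk (@inc_W _ (n + k.+1) (n + k) ltac:(lia) h); lia.
Qed.

End P4.
Section P5.
Variables (R : realType) (d : measure_display) (T : measurableType d)
  (P : probability T R) (E : nat -> set T).
Hypothesis mE : forall m, measurable (E m).
Hypothesis indep : mutually_independent_events P E.
Hypothesis small : forall m, (m < 3)%N -> E m = set0.
Variable n : nat.
Hypothesis n1 : (1 <= n)%N.
Variable Bf : nat -> nat.
Variable beta : nat -> R.
Hypothesis hbeta : forall j t, (3 <= t <= Bf j)%N -> beta j <= pp P E t.
Hypothesis beta1 : forall j, beta j <= 1.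

Definition tau j w := Tsum E w (2 * j + 3) n.
Definition Gj j := [set w | inc E w (n + (2 * j + 2)) /\ (tau j w <= Bf j)%N].
Definition Ych j := [set w | Gj j w /\ ~ E (tau j w) w].
Definition Ach J := [set w | forall j, (j < J)%N -> Ych j w].

Lemma mem_ge3 m w : E m w -> (3 <= m)%N.
Proof. by move=> e; case: (ltnP m 3) => // /small h; rewrite h in e. Qed.

Lemma tau_top j w : inc E w (n + (2 * j + 2)) ->
  (qelt E w (n + (2 * j + 2)) < tau j w)%N.
Proof.
move=> h; have e1 : (2 * j + 2 = (2 * j + 1).+1)%N by lia.
have e2 : (2 * j + 3 = (2 * j + 1).+2)%N by lia.
rewrite /tau e2 e1; rewrite e1 in h; exact: Tsum_top.
Qed.

Lemma tau_ge3 j w : inc E w (n + (2 * j + 2)) -> (3 <= tau j w)%N.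
Proof.
move=> h; apply: leq_trans (ltnW (tau_top h)); apply: (mem_ge3 (w := w)).
by apply: (inc_mem h); apply/andP; split; lia.
Qed.

Lemma tau_agree L w w' j : agree E L w w' -> inc E w (n + (2 * j + 2)) ->
  (qelt E w (n + (2 * j + 2)) < L)%N ->
  inc E w' (n + (2 * j + 2)) /\ tau j w' = tau j w /\
  forall i, (i <= n + (2 * j + 2))%N -> qelt E w' i = qelt E w i.
Proof.
move=> ag h hL; have [h' eqs] := q_agree ag h hL; split => //; split => //.
rewrite /tau; apply: Tsum_eq => i ii; apply: eqs; lia.
Qed.

Lemma Y_agree L w w' j : agree E L w w' -> Ych j w -> (tau j w < L)%N -> Ych j w'.
Proof.
move=> ag [[h hB] ne] tL.
have [h' [et _]] := tau_agree ag h (ltn_trans (tau_top h) tL).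
split; first by split => //; rewrite et.
by rewrite et => /(ag _ tL).
Qed.

Lemma A_det J L : (forall j, (j < J)%N -> (Bf j < L)%N) -> det E L (Ach J).
Proof.
move=> hL w w' ag hA j jJ; apply: (Y_agree ag (hA j jJ)).
have [[_ hB] _] := hA j jJ; exact: leq_ltn_trans hB (hL j jJ).
Qed.

Lemma D_det J t : det E t (Ach J `&` Gj J `&` [set w | tau J w = t]).
Proof.
move=> w w' ag [[hA [h hB]] /= ht].
have [h' [et eqs]] := tau_agree ag h (leq_trans (tau_top h) (eq_leq ht)).
split; last by rewrite /= et.
split; last by split => //; rewrite et.
move=> j jJ; apply: (Y_agree ag (hA j jJ)); rewrite -ht /tau.
have e : (2 * J + 3 = (2 * J + 2).+1)%N by lia.
rewrite e; apply: Tsum_mono => //; first lia.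

Qed.

Lemma A_meas J : measurable (Ach J).
Proof.
apply: (det_meas mE indep (t := (\sum_(j < J) Bf j).+1)); apply: A_det => j jJ.
rewrite ltnS (bigD1 (Ordinal jJ)) //=; exact: leq_addr.
Qed.

Lemma A_rec J : pr P (Ach J.+1) <= (1 - beta J) * pr P (Ach J).
Proof.
pose D := Ach J `&` Gj J.
have hd : forall t, det E t (D `&` [set w | tau J w = t]) by move=> t; exact: D_det.
have hb : forall w, D w -> beta J <= pp P E (tau J w).
  move=> w [_ [h hB]]; apply: hbeta; rewrite hB andbT; exact: tau_ge3 h.
have [m1 b1] := stop_bound mE indep hd hb (Bf J).
have -> : Ach J.+1 = D `&` [set w | (tau J w <= Bf J)%N] `&` [set w | ~ E (tau J w) w].
  apply/seteqP; split => w.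
    move=> hA; have [[h hB] ne] := hA J (ltnSn J).
    split => //; split => //; split => //.
    by move=> j jJ; apply: hA; exact: ltnW.
  move=> [[[hA G] hB] ne] j; rewrite ltnS leq_eqVlt => /orP [/eqP ->|jJ].
    by split.
  exact: hA.
apply: le_trans b1 _; apply: ler_wpM2l; first by rewrite subr_ge0.
apply: pr_le => //; first exact: A_meas.
by move=> w [[]].
Qed.

Lemma A_bound J : pr P (Ach J) <= \prod_(j < J) (1 - beta j).
Proof.
elim: J => [|J IH].
  rewrite big_ord0; apply: pr_le1; exact: A_meas.
rewrite big_ord_recr /= mulrC; apply: le_trans (A_rec J) _.
apply: ler_wpM2l; [by rewrite subr_ge0 | exact: IH].
Qed.

End P5.
Section P6.
Variable R : realType.

Lemma inv_le_frac (a X Y : R) : 0 < X -> 0 < Y -> a * Y <= X -> a / X <= Y^-1.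
Proof. by move=> X0 Y0 h; rewrite ler_pdivrMr // mulrC ler_pdivlMr. Qed.

Lemma prod_bound (I : Type) (s : seq I) (f : I -> R) :
  (forall i, 0 <= f i <= 1) ->
  \prod_(i <- s) (1 - f i) <= (1 + \sum_(i <- s) f i)^-1.
Proof.
move=> hf; elim: s => [|a s IH]; first by rewrite !big_nil addr0 invr1.
rewrite !big_cons.
have S0 : 0 <= \sum_(i <- s) f i by apply: sumr_ge0 => i _; case/andP: (hf i).
have /andP [fa0 fa1] := hf a.
apply: le_trans (_ : (1 - f a) * (1 + \sum_(i <- s) f i)^-1 <= _).
  apply: ler_wpM2l => //; by rewrite subr_ge0.
apply: inv_le_frac.
- by apply: lt_le_trans (ler_wpDr S0 (lexx 1)); exact: ltr01.
- by apply: lt_le_trans (_ : 1 <= _); [exact: ltr01 | rewrite lerDl addr_ge0].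
- nra.
Qed.

Lemma harm m : m%:R / 2 <= \sum_(j < 2 ^ m) ((j.+1)%:R)^-1 :> R.
Proof.
elim: m => [|m IH]; first by rewrite mul0r sumr_ge0 // => j _; rewrite invr_ge0.
rewrite expnS mul2n -addnn big_split_ord /=.
have p2 : (0 : R) < (2 ^ m)%:R by rewrite ltr0n expn_gt0.
have h2 : 1 / 2 <= \sum_(j < 2 ^ m) ((2 ^ m + j).+1%:R)^-1 :> R.
  apply: le_trans (_ : \sum_(j < 2 ^ m) ((2 ^ m + 2 ^ m)%:R)^-1 <= _).
    rewrite sumr_const card_ord -mulr_natr natrD.
    rewrite le_eqVlt; apply/orP; left; apply/eqP; field; rewrite gt_eqF //; lra.
  apply: ler_sum => j _; rewrite lef_pV2 ?posrE ?ltr0n //.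
    by rewrite ler_nat ltn_add2l.
  by rewrite addn_gt0 expn_gt0.
rewrite -natr1 mulrDl; apply: lerD => //.
Qed.

Lemma ln2_ge : 1 / 2 <= ln (2 : R).
Proof.
have h := @le_ln1Dx R (- (1 / 2)) ltac:(lra).
rewrite (_ : 1 + - (1 / 2) = (2 : R)^-1) in h; last by field.
rewrite lnV ?posrE // lerN2 in h; exact: h.
Qed.

Lemma ln_ge1 (x : R) : 4 <= x -> 1 <= ln x.
Proof.
move=> x4; apply: le_trans (_ : ln 4 <= _).
  rewrite (_ : (4 : R) = 2 ^+ 2); last by rewrite expr2; lra.
  rewrite lnXn // mulr2n; have h := ln2_ge; apply: le_trans (lerD h h).
  by rewrite le_eqVlt; apply/orP; left; apply/eqP; field.
rewrite ler_ln // posrE; lra.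
Qed.

Lemma ln_le_id (x : R) : 0 < x -> ln x <= x.
Proof. by move=> x0; apply: ltW; exact: ln_sublinear. Qed.

Lemma geo c M : \sum_(i <- iota c M) 2 / (2 ^ i)%:R <= 4 / (2 ^ c)%:R :> R.
Proof.
elim: M c => [|M IH] c.
  by rewrite big_nil divr_ge0 // ler0n.
rewrite /= big_cons; apply: le_trans (lerD (lexx _) (IH c.+1)) _.
rewrite expnS natrM.
have p2 : (0 : R) < (2 ^ c)%:R by rewrite ltr0n expn_gt0.
rewrite [X in _ <= X](_ : 4 / (2 ^ c)%:R = 2 / (2 ^ c)%:R + 4 / (2%:R * (2 ^ c)%:R)) //.
field; rewrite gt_eqF //.
Qed.

End P6.
Section P7.
Variables (R : realType) (d : measure_display) (T : measurableType d)
  (P : probability T R) (E : nat -> set T).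
Hypothesis mE : forall m, measurable (E m).
Hypothesis indep : mutually_independent_events P E.
Hypothesis small : forall m, (m < 3)%N -> E m = set0.
Hypothesis pE : forall m, (3 <= m)%N -> pp P E m = (ln (m%:R : R))^-1.

Lemma frac_le (a b c e : R) : 0 < b -> 0 < e -> a * e <= c * b -> a / b <= c / e.
Proof. by move=> b0 e0 h; rewrite ler_pdivrMr // mulrAC ler_pdivlMr. Qed.

Lemma sum_const_seq (s : seq nat) (c : R) : \sum_(i <- s) c = (size s)%:R * c.
Proof.
elim: s => [|a s IH]; first by rewrite big_nil mul0r.
by rewrite big_cons IH /= -natr1; ring.
Qed.

Lemma pp01 m : 0 <= pp P E m <= 1.
Proof. by rewrite /pp pr_ge0 ?pr_le1. Qed.

Lemma pp_ge m L : (3 <= m)%N -> (m <= L)%N -> (ln (L%:R : R))^-1 <= pp P E m.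
Proof.
move=> m3 mL; rewrite pE // lef_pV2 ?posrE.
- by rewrite ler_ln ?posrE ?ltr0n ?ler_nat //; [lia|lia].
- by apply: ln_gt0; rewrite ltr1n; lia.
- by apply: ln_gt0; rewrite ltr1n; lia.
Qed.

Definition emptyI i := negL E (iota (4 ^ i).+1 (3 * 4 ^ i)).

Lemma emptyI_meas i : measurable (emptyI i).
Proof. exact: negL_meas. Qed.

Lemma emptyI_bound i : (1 <= i)%N -> pr P (emptyI i) <= 2 / (2 ^ i)%:R.
Proof.
move=> i1.
have -> : pr P (emptyI i) = \prod_(m <- iota (4 ^ i).+1 (3 * 4 ^ i)) (1 - pp P E m).
  have := pr_posnegL mE indep (S := [::]) (U := iota (4 ^ i).+1 (3 * 4 ^ i)) (iota_uniq _ _).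
  by rewrite /= setTI big_nil mul1r.
apply: le_trans (prod_bound _ pp01) _.
have p4 : (4 <= 4 ^ i)%N by rewrite -{1}(expn1 4) leq_pexp2l.
pose L := ln (((4 ^ i.+1)%N)%:R : R).
have L0 : 0 < L by apply: ln_gt0; rewrite ltr1n expnS; lia.
have L4 : L <= 4 * (i.+1)%:R.
  rewrite /L natrX lnXn // mulr_natr lerMn2r; apply/orP; right.
  exact: (@ln_le_id R 4 ltac:(lra)).
pose N := ((3 * 4 ^ i)%N)%:R : R.
have N0 : 0 < N by rewrite ltr0n; lia.
have hs : N * L^-1 <= \sum_(m <- iota (4 ^ i).+1 (3 * 4 ^ i)) pp P E m.
  have eN : N = (size (iota (4 ^ i).+1 (3 * 4 ^ i)))%:R by rewrite size_iota.
  rewrite eN -sum_const_seq !big_seq; apply: ler_sum => m.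
  rewrite mem_iota => /andP [a b]; apply: pp_ge; first lia.
  rewrite expnS; lia.
have x0 : 0 < N * L^-1 by rewrite divr_gt0.
apply: le_trans (_ : (N * L^-1)^-1 <= _).
  rewrite lef_pV2 ?posrE //.
    by apply: le_trans hs _; rewrite lerDr ler01.
  by apply: lt_le_trans (_ : 1 <= _); [exact: ltr01|rewrite lerDl sumr_ge0 // => m _; case/andP: (pp01 m)].
rewrite invfM invrK mulrC.
apply: le_trans (_ : 4 * (i.+1)%:R / N <= _).
  by apply: ler_wpM2r => //; rewrite invr_ge0 ltW.
apply: frac_le => //.
rewrite /N -!natrM ler_nat.
have hi : (i.+1 <= 2 ^ i)%N by apply: ltn_expl.
have e4 : (4 ^ i = 2 ^ i * 2 ^ i)%N by rewrite -expnMn.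
rewrite e4; nia.
Qed.

Definition badL c M := foldr (fun i A => emptyI i `|` A) set0 (iota c M).

Lemma badL_meas c M : measurable (badL c M).
Proof.
rewrite /badL; elim: (iota c M) => [|i s IH] /=; first exact: measurable0.
apply: measurableU => //; exact: emptyI_meas.
Qed.

Lemma badL_bound c M : (1 <= c)%N -> pr P (badL c M) <= 4 / (2 ^ c)%:R.
Proof.
move=> c1; apply: le_trans (geo R c M).
elim: M c c1 => [|M IH] c c1 /=; first by rewrite big_nil pr_set0.
rewrite big_cons; apply: le_trans (pr_U2 P (emptyI_meas c) (badL_meas c.+1 M)) _.
apply: lerD; first exact: emptyI_bound.
exact: IH.
Qed.

Lemma negLP U w : negL E U w <-> forall u, u \in U -> ~ E u w.
Proof.
elim: U => [|j U IH] /=; first by split.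
split.
- move=> [Ej /IH H] u; rewrite inE => /orP [/eqP -> //|]; exact: H.
- move=> H; split; first by apply: H; rewrite inE eqxx.
  by apply/IH => u uS; apply: H; rewrite inE uS orbT.
Qed.

Lemma badLP c M w i : (c <= i < c + M)%N -> emptyI i w -> badL c M w.
Proof.
rewrite /badL -mem_iota; elim: (iota c M) => [|a s IH] //=.
rewrite inE => /orP [/eqP -> h|h e]; [by left|right; exact: IH].
Qed.

Lemma notbad c M w : ~ badL c M w ->
  forall i, (c <= i < c + M)%N -> exists m, [/\ (4 ^ i < m)%N, (m <= 4 ^ i.+1)%N & E m w].
Proof.
move=> nb i hi; apply: contrapT => ne; apply: nb; apply: (badLP hi).
apply/negLP => u; rewrite mem_iota => /andP [a b] eu; apply: ne; exists u; split => //.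
rewrite expnS; lia.
Qed.

End P7.
Section P8.
Variables (R : realType) (d : measure_display) (T : measurableType d)
  (P : probability T R) (E : nat -> set T).
Hypothesis mE : forall m, measurable (E m).
Hypothesis indep : mutually_independent_events P E.
Hypothesis small : forall m, (m < 3)%N -> E m = set0.
Hypothesis pE : forall m, (3 <= m)%N -> pp P E m = (ln (m%:R : R))^-1.

Lemma good_q w c M :
  (forall i, (c <= i < c + M)%N -> exists m, [/\ (4 ^ i < m)%N, (m <= 4 ^ i.+1)%N & E m w]) ->
  inc E w M /\ forall m, (m <= M)%N -> (qelt E w m <= 4 ^ (c + m))%N.
Proof.
elim: M => [|M IH] h.
  split => // m; rewrite leqn0 => /eqP ->; by [].
have [inc1 b1] : inc E w M /\ forall m, (m <= M)%N -> (qelt E w m <= 4 ^ (c + m))%N.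
  by apply: IH => i hi; apply: h; lia.
have [m0 [a0 b0 e0]] := h (c + M)%N ltac:(lia).
have qM := b1 M (leqnn M).
have [gt en mn] := next_spec (ex_intro _ m0 (conj (leq_ltn_trans qM a0) e0)).
rewrite -qeltS in gt en mn.
split.
  move=> i; rewrite ltnS leq_eqVlt => /orP [/eqP -> //|iM]; exact: inc1.
move=> m; rewrite leq_eqVlt => /orP [/eqP ->|mM]; last exact: b1.
apply: leq_trans (mn _ (leq_ltn_trans qM a0) e0) _.
by rewrite addnS.
Qed.

Definition Bf c n j := ((2 * j + 3) * 4 ^ (c + (n + (2 * j + 2))))%N.
Definition betaf c n j : R := (ln ((Bf c n j)%:R : R))^-1.

Lemma Bf_ge4 c n j : (4 <= Bf c n j)%N.
Proof.
rewrite /Bf; apply: leq_trans (_ : 4 ^ (c + (n + (2 * j + 2))) <= _)%N.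
  by rewrite -{1}(expn1 4) leq_pexp2l //; lia.
by apply: leq_pmull; lia.
Qed.

Lemma ln_Bf_ge1 c n j : 1 <= ln ((Bf c n j)%:R : R).
Proof. by apply: ln_ge1; rewrite ler_nat Bf_ge4. Qed.

Lemma betaf_ge0 c n j : 0 <= betaf c n j.
Proof. rewrite invr_ge0; apply: le_trans (ln_Bf_ge1 c n j); exact: ler01. Qed.

Lemma betaf_le1 c n j : betaf c n j <= 1.
Proof. by rewrite invf_le1 ?ln_Bf_ge1 //; apply: lt_le_trans (ln_Bf_ge1 c n j). Qed.

Lemma betaf_pp c n j t : (3 <= t <= Bf c n j)%N -> betaf c n j <= pp P E t.
Proof. by move=> /andP [a b]; apply: pp_ge. Qed.

Lemma betaf_low c n j :
  (((4 * c + 4 * n + 11)%N)%:R * (j.+1)%:R)^-1 <= betaf c n j.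
Proof.
have l0 : 0 < ln ((Bf c n j)%:R : R) by apply: lt_le_trans (ln_Bf_ge1 c n j).
have k0 : (0 : R) < ((4 * c + 4 * n + 11)%N)%:R * (j.+1)%:R by rewrite -natrM ltr0n; lia.
rewrite /betaf lef_pV2 ?posrE //.
rewrite /Bf natrM lnM ?posrE ?ltr0n ?expn_gt0 //; last by lia.
apply: le_trans (_ : ((2 * j + 3)%N)%:R + 4 *+ (c + (n + (2 * j + 2))) <= _).
  apply: lerD; first by apply: ln_le_id; rewrite ltr0n; lia.
  rewrite natrX lnXn // lerMn2r; apply/orP; right.
  exact: (@ln_le_id R 4 ltac:(lra)).
rewrite -(mulr_natr 4) -!natrM -natrD ler_nat; nia.
Qed.

Lemma sum_betaf c n m :
  (((4 * c + 4 * n + 11)%N)%:R)^-1 * (m%:R / 2) <= \sum_(j < 2 ^ m) betaf c n j.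
Proof.
apply: le_trans (_ : \sum_(j < 2 ^ m) (((4 * c + 4 * n + 11)%N)%:R)^-1 * ((j.+1)%:R)^-1 <= _).
  rewrite -mulr_sumr; apply: ler_wpM2l; last exact: harm.
  by rewrite invr_ge0 ler0n.
apply: ler_sum => j _; rewrite -invfM; exact: betaf_low.
Qed.

Lemma inv_small (x e : R) : 0 < e -> 2 / e <= x -> (1 + x)^-1 <= e / 2.
Proof.
move=> e0 h.
have x0 : 0 < x by apply: lt_le_trans h; rewrite divr_gt0.
apply: le_trans (_ : x^-1 <= _).
  rewrite lef_pV2 ?posrE ?lerDr ?ler01 //; lra.
apply: le_trans (_ : (2 / e)^-1 <= _).
  by rewrite lef_pV2 ?posrE // divr_gt0.
by rewrite invf_div.
Qed.

Lemma frac_small (e : R) k : 0 < e -> 8 / e < k%:R -> 4 / ((2 ^ k.+1)%N)%:R <= e / 2.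
Proof.
move=> e0 h; apply: frac_le; rewrite ?ltr0n ?expn_gt0 //.
have hk : (k <= 2 ^ k.+1)%N by apply: ltnW; apply: leq_trans (ltn_expl k (isT : 1 < 2)%N) _; rewrite leq_pexp2l.
have h2 : k%:R <= ((2 ^ k.+1)%N)%:R :> R by rewrite ler_nat.
rewrite ltr_pdivrMr // in h.
rewrite mulrC.
have : e * k%:R <= e * ((2 ^ k.+1)%N)%:R by apply: ler_wpM2l => //; exact: ltW.
lra.
Qed.

Variable n : nat.
Hypothesis n1 : (1 <= n)%N.

Definition Fail := [set w | forall k, odd k -> (3 <= k)%N -> ~ E (Tsum E w k n) w].

Lemma fail_sub c J : Fail `<=` badL E c (n + 2 * J) `|` Ach E n (Bf c n) J.
Proof.
move=> w fw; have [b|nb] := pselect (badL E c (n + 2 * J) w); first by left.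
right; have [hinc hq] := good_q (notbad nb).
move=> j jJ.
have hi : inc E w (n + (2 * j + 2)) by apply: inc_W hinc; lia.
split; first split => //.
  rewrite /tau (_ : (2 * j + 3 = (2 * j + 2).+1)%N); last by lia.
  apply: leq_trans (Tsum_le hi) _; rewrite /Bf (_ : ((2 * j + 2).+1 = 2 * j + 3)%N); last by lia.
  by apply: leq_mul => //; apply: hq; lia.
apply: fw; last by lia.
by rewrite (_ : (2 * j + 3 = (j.*2).+3)%N) /= ?odd_double //; rewrite -mul2n; lia.
Qed.

Definition Nset := \bigcap_c \bigcap_J (badL E c.+1 (n + 2 * J) `|` Ach E n (Bf c.+1 n) J).

Lemma Nset_meas : measurable Nset.
Proof.
apply: bigcapT_measurable => c; apply: bigcapT_measurable => J.
apply: measurableU; first exact: (badL_meas mE).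
exact: (A_meas mE indep n1).
Qed.

Lemma Nset_bound c J : pr P Nset <= 4 / ((2 ^ c.+1)%N)%:R + (1 + \sum_(j < J) betaf c.+1 n j)^-1.
Proof.
have mU : measurable (badL E c.+1 (n + 2 * J) `|` Ach E n (Bf c.+1 n) J).
  by apply: measurableU; [exact: (badL_meas mE)|exact: (A_meas mE indep n1)].
apply: le_trans (_ : pr P (badL E c.+1 (n + 2 * J) `|` Ach E n (Bf c.+1 n) J) <= _).
  apply: pr_le => //; first exact: Nset_meas.
  by move=> w hw; exact: (hw c I J I).
apply: le_trans (pr_U2 P (badL_meas mE c.+1 _) (A_meas mE indep n1 _ _)) _.
apply: lerD; first exact: badL_bound.
apply: le_trans (A_bound mE indep small n1 (fun j t => @betaf_pp c.+1 n j t) (betaf_le1 c.+1 n) J) _.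
apply: prod_bound => j; rewrite betaf_ge0 betaf_le1 //.
Qed.

Lemma Nset_null : pr P Nset = 0.
Proof.
apply/eqP; rewrite eq_le; apply/andP; split; last exact: (pr_ge0 P Nset_meas).
apply/ler_addgt0Pr => e e0; rewrite add0r.
pose c := Num.Def.archi_bound (8 / e).
have hc0 : 0 <= 8 / e by apply: ltW; rewrite divr_gt0.
have hc : 8 / e < c%:R by exact: archi_boundP.
pose K : R := ((4 * c.+1 + 4 * n + 11)%N)%:R.
have K0 : 0 < K by rewrite ltr0n; lia.
pose m := Num.Def.archi_bound (4 * K / e).
have hm0 : 0 <= 4 * K / e by apply: ltW; rewrite divr_gt0 // mulr_gt0.
have hm : 4 * K / e < m%:R by exact: archi_boundP.
apply: le_trans (Nset_bound c (2 ^ m)) _.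
rewrite (splitr e); apply: lerD; first exact: frac_small.
apply: inv_small => //; apply: le_trans (sum_betaf c.+1 n m).
rewrite -/K.
have -> : 2 / e = K^-1 * ((4 * K / e) / 2).
  by field; apply/andP; split; rewrite gt_eqF.
apply: ler_wpM2l; first by rewrite invr_ge0 ltW.
apply: ler_wpM2r; first by rewrite invr_ge0.
exact: ltW.
Qed.

End P8.
Theorem mainTheorem2 (R : realType) (d : measure_display) (T : measurableType d)
  (P : probability T R) (E : nat -> set T) :
  cramer_model P E ->
  {ae P, forall w, forall n : nat, (1 <= n)%N ->
     exists k : nat, [/\ odd k, (3 <= k)%N & E (Tsum E w k n) w]}.
Proof.
case=> mE indep hP small.
have pE : forall m, (3 <= m)%N -> pp P E m = (ln (m%:R : R))^-1.
  by move=> m m3; rewrite /pp /pr hP.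
have H : P.-negligible (\bigcup_n Nset E n.+1).
  apply: negligible_bigcup => n; have mN : measurable (Nset E n.+1).
    by apply: (Nset_meas (P := P)).
  apply/(negligibleP _ mN).
  have h := prE P mN; rewrite (Nset_null mE indep small pE (n := n.+1) isT) in h; exact: h.
apply: (negligibleS _ H) => w /= nQ.
have [n [n1 hn]] : exists n, (1 <= n)%N /\ forall k, odd k -> (3 <= k)%N -> ~ E (Tsum E w k n) w.
  apply: contrapT => hne; apply: nQ => n n1; apply: contrapT => nk; apply: hne.
  by exists n; split => // k ok k3 ek; apply: nk; exists k; split.
case: n n1 hn => [//|n] _ hn.
exists n => //; move=> c _ J _.
exact: (fail_sub (n := n.+1) isT c.+1 J hn).
Qed.
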